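(* Assume the setting and algorithm described in the context, and that $F$ satisfies the Polyak–Łojasiewicz condition with constant $\mu>0$. If $0<\alpha\le\frac1{2L}$, then for all $k\ge0$, almost surely, $$\mathbb E\big[F(\bar x^{k+1})-F^*\,|\,\mathcal F^k\big]\le(1-\mu\alpha)\big(F(\bar x^k)-F^*\big)+\frac{\alpha L^2}{n}\|x^k-Jx^k\|^2+\frac{\alpha^2L^3}{n}t^k .$$
   Context: Setting. Let $n,m,p\ge1$ be integers and $\mathcal V=\{1,\dots,n\}$. For each $i\in\mathcal V$ and $j\in\{1,\dots,m\}$, $f_{i,j}:\mathbb R^p\to\mathbb R$ is differentiable and $L$-smooth for some $L>0$, i.e. $\|\nabla f_{i,j}(x)-\nabla f_{i,j}(y)\|\le L\|x-y\|$ for all $x,y\in\mathbb R^p$. Let $f_i:=\frac1m\sum_{j=1}^m f_{i,j}$ and $F:=\frac1n\sum_{i=1}^n f_i$, and assume $F^*:=\inf_{x\in\mathbb R^p}F(x)>-\infty$. Let $\underline W=(\underline w_{ir})\in\mathbb R^{n\times n}$ be a nonnegative, primitive, doubly stochastic matrix ($\underline W\mathbf 1_n=\mathbf 1_n$, $\mathbf 1_n^\top\underline W=\mathbf 1_n^\top$), and let $\lambda\in[0,1)$ be its second largest singular value. Any expression with $\lambda$ in a denominator is read as $+\infty$ when $\lambda=0$. Algorithm GT-SAGA with step-size $\alpha>0$: fix a deterministic $\bar x^0\in\mathbb R^p$; for all $i\in\mathcal V$ set $x_i^0=\bar x^0$, $z_{i,j}^0=x_i^0$ for all $j$, $y_i^0=0$,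 $g_i^{-1}=0$. For $k=0,1,2,\dots$ and every $i\in\mathcal V$: draw $\tau_i^k$ uniformly from $\{1,\dots,m\}$; set $g_i^k=\nabla f_{i,\tau_i^k}(x_i^k)-\nabla f_{i,\tau_i^k}(z_{i,\tau_i^k}^k)+\frac1m\sum_{j=1}^m\nabla f_{i,j}(z_{i,j}^k)$; set $y_i^{k+1}=\sum_{r=1}^n\underline w_{ir}(y_r^k+g_r^k-g_r^{k-1})$; set $x_i^{k+1}=\sum_{r=1}^n\underline w_{ir}(x_r^k-\alpha y_r^{k+1})$; draw $s_i^k$ uniformly from $\{1,\dots,m\}$; set $z_{i,j}^{k+1}=x_i^k$ if $j=s_i^k$ and $z_{i,j}^{k+1}=z_{i,j}^k$ otherwise. The family $\{\tau_i^k,s_i^k: i\in\mathcal V,k\ge0\}$ is independent. Notation. $x^k,y^k,g^k\in\mathbb R^{np}$ stack the $x_i^k$, $y_i^k$, $g_i^k$; $\nabla\mathbf f(x^k)\in\mathbb R^{np}$ stacks $\nabla f_i(x_i^k)$, $i=1,\dots,n$; $W=\underline W\otimes I_p$, $J=(\frac1n\mathbf 1_n\mathbf 1_n^\top)\otimes I_p$; $\bar x^k=\frac1n\sum_i x_i^k$, $\bar g^k=\frac1n\sum_i g_i^k$, $\overline{\nabla\mathbf f}(x^k)=\frac1n\sum_i\nabla f_i(x_i^k)$. $\mathcal F^0$ is the trivial $\sigma$-algebra and $\mathcal F^k=\sigma(\{\tau_i^t,s_i^t:i\in\mathcal V,\ t\le k-1\})$ for $k\ge1$. $t^k:=\frac1n\sum_{i=1}^n\frac1m\sum_{j=1}^m\|\bar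 x^k-z_{i,j}^k\|^2$. $\|\nabla\mathbf f(x^0)\|^2:=\sum_{i=1}^n\|\nabla f_i(\bar x^0)\|^2$. Norms are Euclidean (spectral for matrices); vector and matrix inequalities are entrywise. Polyak–Łojasiewicz (PL) condition with constant $\mu>0$: $2\mu(F(x)-F^* )\le\|\nabla F(x)\|^2$ for all $x\in\mathbb R^p$. *)

(* Defs.v *)
From HB Require Import structures.
From mathcomp Require Import all_boot all_order all_algebra.
From mathcomp Require Import all_classical all_reals all_analysis.
Set Implicit Arguments. Unset Strict Implicit. Unset Printing Implicit Defensive.
Import Order.TTheory GRing.Theory Num.Theory.
Import numFieldNormedType.Exports.
Local Open Scope ring_scope.

Section GTSAGA.
Variables (R : realType) (n m p : nat).

Notation vec := 'rV[R]_p.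

Definition dotv (u v : vec) : R := \sum_(l < p) u 0 l * v 0 l.
Definition enorm (u : vec) : R := Num.sqrt (dotv u u).

(* One random draw at one iteration: for each node i, the pair (tau_i, s_i),
   each in {1..m} (represented by 'I_m). *)
Definition draw := {ffun 'I_n -> 'I_m * 'I_m}.

(* State of GT-SAGA at iteration k:  x^k, y^k, z^k_{i,j}, and g^{k-1}. *)
Record gt_state := GTState {
  st_x : 'I_n -> vec;
  st_y : 'I_n -> vec;
  st_z : 'I_n -> 'I_m -> vec;
  st_gprev : 'I_n -> vec }.

Variables (W : 'M[R]_n) (alpha : R) (gr : 'I_n -> 'I_m -> vec -> vec) (x0 : vec).

Definition gt_init : gt_state :=
  GTState (fun _ => x0) (fun _ => 0) (fun _ _ => x0) (fun _ => 0).

Definition gt_g (st : gt_state) (c : draw) (i : 'I_n) : vec :=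
  let tau := (c i).1 in
  gr i tau (st_x st i) - gr i tau (st_z st i tau)
  + m%:R^-1 *: \sum_(j < m) gr i j (st_z st i j).

Definition gt_step (st : gt_state) (c : draw) : gt_state :=
  let g := gt_g st c in
  let y' := fun i => \sum_(r < n) W i r *: (st_y st r + g r - st_gprev st r) in
  let x' := fun i => \sum_(r < n) W i r *: (st_x st r - alpha *: y' r) in
  let z' := fun i j => if j == (c i).2 then st_x st i else st_z st i j in
  GTState x' y' z' g.

Fixpoint gt_iter (omega : nat -> draw) (k : nat) : gt_state :=
  match k with
  | 0 => gt_init
  | k'.+1 => gt_step (gt_iter omega k') (omega k')
  end.

Definition xbar (st : gt_state) : vec := n%:R^-1 *: \sum_(i < n) st_x st i.

Definition consensus_err (st : gt_state) : R :=
  \sum_(i < n) enorm (st_x st i - xbar st) ^+ 2.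

Definition t_err (st : gt_state) : R :=
  n%:R^-1 * \sum_(i < n) (m%:R^-1 * \sum_(j < m) enorm (xbar st - st_z st i j) ^+ 2).

End GTSAGA.

(* Sample space of the draws at iterations 0..K-1; by independence and
   uniformity of all tau_i^t, s_i^t it carries the uniform probability. *)
Definition Omega (n m K : nat) := {ffun 'I_K -> draw n m}.

(* A finite history viewed as a draw sequence (values beyond K-1 are never
   used by the quantities considered). *)
Definition hist_seq (n m k : nat) (w : Omega n m k.+1) : nat -> draw n m :=
  fun t => w (inord t).

(* Conditional expectation, w.r.t. the uniform probability on Omega n m K, given
   the sigma-algebra F^k generated by the draws at iterations t < k.  Since this
   sigma-algebra is generated by the finite partition into the atoms
   {w' | w' t = w t for all t < k}, each of positive probability, the conditional
   expectation is the average of X over the atom containing w. *)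
Definition same_past (n m K k : nat) (w w' : Omega n m K) : bool :=
  [forall t : 'I_K, (t < k)%N ==> (w' t == w t)].

Definition condexp (R : realType) (n m K k : nat) (X : Omega n m K -> R)
  (w : Omega n m K) : R :=
  (\sum_(w' | same_past k w w') X w') / #|[pred w' | same_past k w w']|%:R.

Definition has_gradient (R : realType) (p : nat) (f : 'rV[R]_p -> R)
  (gradf : 'rV[R]_p -> 'rV[R]_p) : Prop :=
  forall x, differentiable f x /\ forall h, 'd f x h = dotv (gradf x) h.

Definition L_smooth_grad (R : realType) (p : nat) (L : R)
  (gradf : 'rV[R]_p -> 'rV[R]_p) : Prop :=
  forall x y, enorm (gradf x - gradf y) <= L * enorm (x - y).

Definition primitive_ds (R : realType) (n : nat) (W : 'M[R]_n) : Prop :=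
  (forall i j, 0 <= W i j) /\
  (exists k : nat, (0 < k)%N /\ forall i j, 0 < (W ^+ k) i j) /\
  (forall i, \sum_(r < n) W i r = 1) /\
  (forall r, \sum_(i < n) W i r = 1).

(* Main.v *)
Require Import Defs.
From HB Require Import structures.
From mathcomp Require Import all_boot all_order all_algebra.
From mathcomp Require Import all_classical all_reals all_analysis.
From mathcomp Require Import ring lra.
Import Order.TTheory GRing.Theory Num.Theory.
Import numFieldNormedType.Exports.
Local Open Scope ring_scope.
Set Implicit Arguments. Unset Strict Implicit. Unset Printing Implicit Defensive.

Section Dot.
Variables (R : realType) (p : nat).
Implicit Types u v w : 'rV[R]_p.

Lemma dotvC u v : dotv u v = dotv v u.
Proof. by apply: eq_bigr => l _; rewrite mulrC. Qed.
Lemma dotvDl u v w : dotv (u + v) w = dotv u w + dotv v w.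
Proof. by rewrite /dotv -big_split; apply: eq_bigr => l _; rewrite mxE mulrDl. Qed.
Lemma dotvBl u v w : dotv (u - v) w = dotv u w - dotv v w.
Proof. by rewrite /dotv -sumrB; apply: eq_bigr => l _; rewrite !mxE mulrBl. Qed.
Lemma dotvZl a u w : dotv (a *: u) w = a * dotv u w.
Proof. by rewrite /dotv mulr_sumr; apply: eq_bigr => l _; rewrite mxE mulrA. Qed.
Lemma dotvDr u v w : dotv w (u + v) = dotv w u + dotv w v.
Proof. by rewrite dotvC dotvDl !(dotvC w). Qed.
Lemma dotvBr u v w : dotv w (u - v) = dotv w u - dotv w v.
Proof. by rewrite dotvC dotvBl !(dotvC w). Qed.
Lemma dotvZr a u w : dotv w (a *: u) = a * dotv w u.
Proof. by rewrite dotvC dotvZl dotvC. Qed.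
Lemma dotv0l w : dotv 0 w = 0.
Proof. by rewrite /dotv big1 // => l _; rewrite mxE mul0r. Qed.
Lemma dotv0r w : dotv w 0 = 0.
Proof. by rewrite dotvC dotv0l. Qed.
Lemma dotv_suml (I : finType) (F : I -> 'rV[R]_p) w :
  dotv (\sum_i F i) w = \sum_i dotv (F i) w.
Proof.
rewrite /dotv exchange_big /=; apply: eq_bigr => l _.
by rewrite summxE mulr_suml.
Qed.
Lemma dotv_sumr (I : finType) (F : I -> 'rV[R]_p) w :
  dotv w (\sum_i F i) = \sum_i dotv w (F i).
Proof. by rewrite dotvC dotv_suml; apply: eq_bigr => i _; rewrite dotvC. Qed.
Lemma dotv_ge0 u : 0 <= dotv u u.
Proof. by apply: sumr_ge0 => l _; rewrite -expr2 sqr_ge0. Qed.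
Lemma enorm2 u : enorm u ^+ 2 = dotv u u.
Proof. by rewrite /enorm sqr_sqrtr // dotv_ge0. Qed.
Lemma enorm_ge0 u : 0 <= enorm u.
Proof. exact: sqrtr_ge0. Qed.
End Dot.

Section Descent.
Variables (R : realType) (p : nat) (f : 'rV[R]_p -> R) (g : 'rV[R]_p -> 'rV[R]_p) (L : R).
Hypothesis hg : has_gradient f g.
Hypothesis hL : 0 < L.
Hypothesis hs : L_smooth_grad L g.

Lemma phi_derive (x d : 'rV[R]_p) (t : R) :
  is_derive t 1 (fun s : R => f (s *: d + x)) (dotv (g (t *: d + x)) d).
Proof.
have [df dg] := hg (t *: d + x).
have E : (fun h : R => h^-1 *: (((fun s : R => f (s *: d + x)) \o shift t) (h *: 1)
            - f (t *: d + x))) =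
         (fun h : R => h^-1 *: ((f \o shift (t *: d + x)) (h *: d) - f (t *: d + x))).
  apply: funext => h /=; congr (_ *: (f _ - _)).
  by rewrite /shift /= [_%:A]mulr1 scalerDl addrA.
split.
  rewrite /derivable E; exact: diff_derivable.
by rewrite /derive E -dg -deriveE.
Qed.

Lemma descent (x d : 'rV[R]_p) :
  f (d + x) <= f x + dotv (g x) d + L / 2 * dotv d d.
Proof.
pose a := dotv (g x) d; pose b := L / 2 * dotv d d.
pose psi := fun s : R => f (s *: d + x) - s * a - s ^+ 2 * b.
have Dpsi : forall t : R, is_derive t (1:R) psi (dotv (g (t *: d + x)) d - a - (2 * t) * b).
  move=> t; have H := phi_derive x d t.
  have -> : psi = (fun s : R => f (s *: d + x)) - a *: id - b *: (@id R) ^+ 2.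
    by apply: funext => s; rewrite /psi !fctE /=; congr (_ - _ - _); apply: mulrC.
  apply: is_derive_eq.
  change (a%:A) with (a * 1); change ((2 * t ^+ 2.-1)%:A) with ((2 * t ^+ 2.-1) * 1).
  rewrite /= expr1 !mulr1; change (b *: (2 * t)) with (b * (2 * t)); ring.
have key : psi 1 <= psi 0.
  have H1 : forall t : R, t \in `]0, 1[ -> derivable psi t 1.
    by move=> t _; have [] := Dpsi t.
  have H2 : forall t : R, t \in `]0, 1[ -> derive1 psi t <= 0.
    move=> t; rewrite in_itv /= => /andP[t0 t1].
    rewrite derive1E (@derive_val _ _ _ _ _ _ _ (Dpsi t)).
    set u := g (t *: d + x) - g x.
    have hu : dotv u u <= L ^+ 2 * t ^+ 2 * dotv d d.
      have := hs (t *: d + x) x; rewrite addrK -!enorm2 => H.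
      have -> : L ^+ 2 * t ^+ 2 * enorm d ^+ 2 = (L * enorm (t *: d)) ^+ 2.
        rewrite exprMn enorm2 enorm2 dotvZl dotvZr; ring.
      by rewrite lerXn2r ?nnegrE ?enorm_ge0 // mulr_ge0 ?enorm_ge0 // ltW.
    have -> : dotv (g (t *: d + x)) d - a - 2 * t * b = dotv u d - L * t * dotv d d.
      by rewrite /a /b /u dotvBl; field.
    clearbody u.
    have hq : 2 * (L * t) * dotv u d <= dotv u u + (L * t) ^+ 2 * dotv d d.
      have := dotv_ge0 (u - (L * t) *: d).
      rewrite dotvBl !dotvBr !dotvZl !dotvZr (dotvC d u) => hq; lra.
    have Lt : 0 < L * t by rewrite mulr_gt0.
    rewrite subr_le0 -(ler_pM2l (_ : 0 < 2 * (L * t))) ?mulr_gt0 //.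
    apply: (le_trans hq); rewrite exprMn; lra.
  have H3 : {within `[0, 1], continuous psi}%classic.
    apply: derivable_within_continuous => t _; by have [] := Dpsi t.
  exact: (ler0_derive1_nincr H1 H2 H3 (lexx 0) ler01 (lexx 1)).
rewrite /psi !scale1r scale0r add0r expr1n !mul1r expr0n /= !mul0r !subr0 in key. rewrite /a /b in key. lra.
Qed.
End Descent.

Section Var.
Variables (R : realType) (p : nat).

Lemma dotvN (u v : 'rV[R]_p) : dotv (u - v) (u - v) = dotv (v - u) (v - u).
Proof. by rewrite -opprB /dotv; apply: eq_bigr => l _; rewrite !mxE mulrNN. Qed.

Lemma dotv_par (u v : 'rV[R]_p) : dotv (u + v) (u + v) <= 2 * dotv u u + 2 * dotv v v.
Proof.
have := dotv_ge0 (u - v).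
rewrite dotvBl !dotvBr !dotvDl !dotvDr (dotvC v u); lra.
Qed.

Lemma var_id (J : finType) (v : J -> 'rV[R]_p) : (0 < #|J|)%N ->
  \sum_j dotv (v j - (#|J|%:R)^-1 *: \sum_k v k) (v j - (#|J|%:R)^-1 *: \sum_k v k) =
  \sum_j dotv (v j) (v j) - #|J|%:R * dotv ((#|J|%:R)^-1 *: \sum_k v k) ((#|J|%:R)^-1 *: \sum_k v k).
Proof.
move=> hJ; set a := _ *: _.
have hS : \sum_k v k = #|J|%:R *: a.
  by rewrite /a scalerA mulfV ?scale1r // pnatr_eq0 -lt0n.
have -> : \sum_j dotv (v j - a) (v j - a) =
   \sum_j dotv (v j) (v j) - 2 * \sum_j dotv (v j) a + \sum_(j : J) dotv a a.
  rewrite mulr_sumr -sumrB -big_split /=; apply: eq_bigr => j _.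
  rewrite dotvBl !dotvBr (dotvC a (v j)); ring.
rewrite -dotv_suml hS dotvZl sumr_const -mulr_natl; ring.
Qed.

Lemma var_le (J : finType) (v : J -> 'rV[R]_p) : (0 < #|J|)%N ->
  \sum_j dotv (v j - (#|J|%:R)^-1 *: \sum_k v k) (v j - (#|J|%:R)^-1 *: \sum_k v k) <=
  \sum_j dotv (v j) (v j).
Proof.
move=> hJ; rewrite var_id // lerBlDr lerDl mulr_ge0 ?ler0n ?dotv_ge0 //.
Qed.

Lemma jensen (J : finType) (v : J -> 'rV[R]_p) : (0 < #|J|)%N ->
  dotv ((#|J|%:R)^-1 *: \sum_k v k) ((#|J|%:R)^-1 *: \sum_k v k) <=
  (#|J|%:R)^-1 * \sum_j dotv (v j) (v j).
Proof.
move=> hJ; have := var_id v hJ.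
have H0 : 0 <= \sum_j dotv (v j - (#|J|%:R)^-1 *: \sum_k v k) (v j - (#|J|%:R)^-1 *: \sum_k v k).
  by apply: sumr_ge0 => j _; apply: dotv_ge0.
move=> E; rewrite E subr_ge0 in H0.
have hJ' : 0 < #|J|%:R :> R by rewrite ltr0n.
by rewrite ler_pdivlMl // .
Qed.

Lemma jensen_ord (k : nat) (v : 'I_k -> 'rV[R]_p) : (0 < k)%N ->
  dotv (k%:R^-1 *: \sum_i v i) (k%:R^-1 *: \sum_i v i) <= k%:R^-1 * \sum_i dotv (v i) (v i).
Proof. by move=> hk; have := @jensen _ v; rewrite card_ord; apply. Qed.

End Var.

Section Expect.
Variables (R : realType) (I X : finType).

Definition Kc : R := \sum_(c : {ffun I -> X}) 1.

Lemma EA_gen (i : I) (phi : X -> R) :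
  \sum_(c : {ffun I -> X}) phi (c i) =
  (\sum_x phi x) * \prod_(t | t != i) \sum_(x : X) (1 : R).
Proof.
pose F := fun t x => if t == i then phi x else 1.
have H := bigA_distr_bigA F.
have E1 : \prod_t \sum_x F t x = (\sum_x phi x) * \prod_(t | t != i) \sum_(x : X) (1 : R).
  rewrite (bigD1 i) //=; congr (_ * _).
    by apply: eq_bigr => x _; rewrite /F eqxx.
  by apply: eq_bigr => t /negbTE ti; apply: eq_bigr => x _; rewrite /F ti.
rewrite -E1 H; apply: eq_bigr => c _.
rewrite (bigD1 i) //= /F eqxx big1 ?mulr1 // => t /negbTE ->; done.
Qed.

Lemma EA (i : I) (phi : X -> R) :
  #|X|%:R * \sum_(c : {ffun I -> X}) phi (c i) = Kc * \sum_x phi x.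
Proof.
rewrite /Kc (EA_gen i (fun _ => 1)) EA_gen sumr_const.
rewrite (_ : #|xpredT| = #|X|) //; ring.
Qed.

Lemma EAv p (i : I) (v : X -> 'rV[R]_p) :
  #|X|%:R *: \sum_(c : {ffun I -> X}) v (c i) = Kc *: \sum_x v x.
Proof.
apply/rowP => q; rewrite !mxE !summxE mulr_natl -mulr_natl.
rewrite (EA i (fun x => v x 0 q)); congr (_ * _).
Qed.
Arguments EAv [p].

Lemma EB (i l : I) (a b : X -> R) : i != l -> \sum_x a x = 0 ->
  \sum_(c : {ffun I -> X}) a (c i) * b (c l) = 0.
Proof.
move=> il ha.
pose F := fun t x => if t == i then a x else if t == l then b x else 1.
have H := bigA_distr_bigA F.
have E1 : \prod_t \sum_x F t x = 0.
  rewrite (bigD1 i) //= (_ : \sum_x F i x = 0) ?mul0r //.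
  by rewrite -[RHS]ha; apply: eq_bigr => x _; rewrite /F eqxx.
transitivity (\sum_(c : {ffun I -> X}) \prod_t F t (c t)); last by rewrite -H E1.
apply: eq_bigr => c _.
rewrite (bigD1 i) //= (bigD1 l) /=; last by rewrite eq_sym.
rewrite big1; last by move=> t /andP[/negbTE ti /negbTE tl]; rewrite /F ti tl.
by rewrite mulr1 /F eqxx eq_sym (negbTE il) eqxx.
Qed.

Lemma EBv p (i l : I) (a b : X -> 'rV[R]_p) : i != l -> \sum_x a x = 0 ->
  \sum_(c : {ffun I -> X}) dotv (a (c i)) (b (c l)) = 0.
Proof.
move=> il ha; rewrite /dotv exchange_big /= big1 // => q _.
apply: (@EB i l (fun x => a x 0 q) (fun x => b x 0 q)) => //.
by have := congr1 (fun M : 'rV[R]_p => M 0 q) ha; rewrite summxE mxE.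
Qed.

Lemma Kc_gt0 : (0 < #|X|)%N -> 0 < Kc.
Proof.
move=> hX; rewrite /Kc sumr_const card_ffun ltr0n expn_gt0 hX.
done.
Qed.

End Expect.

Section GT.
Variables (R : realType) (n m p : nat) (W : 'M[R]_n) (alpha : R)
  (gr : 'I_n -> 'I_m -> 'rV[R]_p -> 'rV[R]_p) (x0 : 'rV[R]_p).
Hypothesis hcol : forall r, \sum_(i < n) W i r = 1.

Lemma sumW (v : 'I_n -> 'rV[R]_p) : \sum_i \sum_r W i r *: v r = \sum_r v r.
Proof.
rewrite exchange_big /=; apply: eq_bigr => r _.
by rewrite -scaler_suml hcol scale1r.
Qed.

Lemma gt_inv omega k :
  \sum_i st_y (gt_iter W alpha gr x0 omega k) i =
  \sum_i st_gprev (gt_iter W alpha gr x0 omega k) i.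
Proof.
elim: k => [|k IH] /=; first by rewrite !big1.
by rewrite sumW sumrB big_split /= IH addrAC subrr add0r.
Qed.

Lemma xbar_step (st : gt_state R n m p) c :
  \sum_i st_y st i = \sum_i st_gprev st i ->
  xbar (gt_step W alpha gr st c) =
  xbar st - alpha *: (n%:R^-1 *: \sum_i gt_g gr st c i).
Proof.
move=> hinv.
have E : forall (a b d : 'I_n -> 'rV[R]_p), \sum_r (a r + b r - d r) = \sum_r a r + \sum_r b r - \sum_r d r.
  by move=> a b d; rewrite !big_split /= sumrN.
have E2 : forall (a d : 'I_n -> 'rV[R]_p), \sum_r (a r - d r) = \sum_r a r - \sum_r d r.
  by move=> a d; rewrite !big_split /= sumrN.
rewrite /xbar /= sumW E2 -scaler_sumr sumW E hinv addrAC subrr add0r.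
by rewrite scalerBr !scalerA mulrC.
Qed.
End GT.

Lemma condexp_step (R : realType) n m k (w : Omega n m k.+1) (G : draw n m -> R)
  (X : Omega n m k.+1 -> R) :
  (forall w', same_past k w w' -> X w' = G (w' ord_max)) ->
  condexp k X w = (\sum_c G c) / \sum_(c : draw n m) 1.
Proof.
move=> hX.
pose upd := fun c : draw n m => [ffun t : 'I_k.+1 => if t == ord_max then c else w t] : Omega n m k.+1.
pose h' := fun w' : Omega n m k.+1 => w' ord_max.
have hinv : forall w', same_past k w w' -> upd (h' w') = w'.
  move=> w' /forallP hw; apply/ffunP => t; rewrite ffunE /h'.
  case: eqP => [-> //|/eqP tn].
  have tk : (t < k)%N.
    by have := ltn_ord t; rewrite ltnS leq_eqVlt => /orP[/eqP e|//]; case/eqP: tn; apply: val_inj.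
  by have := hw t; rewrite tk /= => /eqP ->.
have hP : forall c, same_past k w (upd c).
  move=> c; apply/forallP => t; apply/implyP => tk; rewrite ffunE.
  case: (t =P ord_max) => [e|_ //]; by move: tk; rewrite e /= ltnn.
have hh : forall c, h' (upd c) = c by move=> c; rewrite /h' /upd ffunE eqxx.
rewrite /condexp (reindex_onto upd h' hinv).
have -> : #|[pred w' | same_past k w w']|%:R = \sum_(w' | same_past k w w') (1 : R).
  by rewrite sumr_const.
rewrite (reindex_onto upd h' hinv).
congr (_ / _).
  apply: eq_big => c; first by rewrite hP /h' /upd ffunE eqxx /= eqxx.
  by move=> _; rewrite hX // /h' /upd ffunE eqxx.
apply: eq_big => c; [by rewrite hP /h' /upd ffunE eqxx /= eqxx | done].
Qed.

Section Iter.
Variables (R : realType) (n m p : nat) (W : 'M[R]_n) (alpha : R)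
  (gr : 'I_n -> 'I_m -> 'rV[R]_p -> 'rV[R]_p) (x0 : 'rV[R]_p).
Lemma iter_past omega omega' k : (forall t, (t < k)%N -> omega t = omega' t) ->
  gt_iter W alpha gr x0 omega k = gt_iter W alpha gr x0 omega' k.
Proof.
elim: k => [//|k IH] H /=.
rewrite IH ?H // => t tk; apply: H; exact: ltnW.
Qed.
End Iter.

Lemma hist_past n m k (w w' : Omega n m k.+1) : same_past k w w' ->
  forall t, (t < k)%N -> hist_seq w' t = hist_seq w t.
Proof.
move=> /forallP hw t tk; rewrite /hist_seq.
have := hw (inord t); rewrite inordK ?tk /= ?(ltn_trans tk) // => /eqP.
by [].
Qed.

Lemma hist_last n m k (w : Omega n m k.+1) : hist_seq w k = w ord_max.
Proof. by rewrite /hist_seq; congr (w _); apply: val_inj; rewrite /= inordK. Qed.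

Lemma sumB' (V : zmodType) (I : finType) (a b : I -> V) :
  \sum_i (a i - b i) = \sum_i a i - \sum_i b i.
Proof. by rewrite big_split /= sumrN. Qed.

Lemma dotv_exp (R : realType) p (a b : 'rV[R]_p) k :
  dotv (a + k *: b) (a + k *: b) = dotv a a + 2 * k * dotv a b + k * k * dotv b b.
Proof. rewrite dotvDl !dotvDr !dotvZl !dotvZr (dotvC b a); ring. Qed.

Lemma final_ineq (R : realFieldType) (A0 g2 h2 D gh Q C T a L mu iN N : R) :
  0 < a -> 0 < L -> a * L <= 1/2 -> 0 < iN -> iN * N = 1 -> 1 <= N ->
  0 <= C -> 0 <= h2 ->
  2 * gh = g2 + h2 - D ->
  2 * mu * A0 <= g2 -> D <= L ^+ 2 * iN * C -> Q <= 2 * L ^+ 2 * (C + N * T) ->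
  A0 - a * gh + L / 2 * a ^+ 2 * (h2 + iN * iN * Q) <=
  (1 - mu * a) * A0 + a * L ^+ 2 * iN * C + a ^+ 2 * L ^+ 3 * iN * T.
Proof.
move=> ha hL haL hiN hNN hN hC hh2 hgh hPL hD hQ.
have f1 : a * (2 * mu * A0) <= a * g2 by rewrite ler_pM2l.
have f2 : 0 <= a * (1 - L * a) * h2.
  have : 0 <= 1 - L * a by rewrite mulrC; lra.
  by move=> h; rewrite mulr_ge0 // mulr_ge0 // ltW.
have f3 : a * D <= a * (L ^+ 2 * iN * C) by rewrite ler_pM2l.
have hc : 0 <= L / 2 * a ^+ 2 * (iN * iN).
  have hL2 : 0 <= L / 2 by rewrite divr_ge0 // ltW.
  have ha2 : 0 <= a ^+ 2 by apply: sqr_ge0.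
  have hii : 0 <= iN * iN by rewrite mulr_ge0 // ltW.
  by rewrite mulr_ge0 // mulr_ge0.
have f4 := ler_wpM2l hc hQ.
have f5 : a ^+ 2 * L ^+ 3 * (iN * iN) * C <= a * L ^+ 2 * iN * C / 2.
  have hiN1 : iN <= 1.
    have : iN * 1 <= iN * N by rewrite ler_pM2l.
    by rewrite mulr1 hNN.
  have h0 : 0 <= a * L ^+ 2 * iN * C.
    by rewrite mulr_ge0 // mulr_ge0 ?(ltW hiN) // mulr_ge0 ?(ltW ha) ?sqr_ge0.
  have h1 : a * L * iN <= 1 / 2.
    apply: le_trans haL; rewrite -[X in _ <= X]mulr1 ler_pM2l //; last by rewrite mulr_gt0.
  have := ler_wpM2l h0 h1.
  have -> : a ^+ 2 * L ^+ 3 * (iN * iN) * C = a * L ^+ 2 * iN * C * (a * L * iN) by ring.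
  move=> H; apply: (le_trans H); by rewrite mul1r.
have e1 : iN * iN * N = iN by rewrite -mulrA hNN mulr1.
have f4' : L / 2 * a ^+ 2 * (iN * iN) * Q <=
   a ^+ 2 * L ^+ 3 * (iN * iN) * C + a ^+ 2 * L ^+ 3 * iN * T.
  apply: (le_trans f4).
  have -> : L / 2 * a ^+ 2 * (iN * iN) * (2 * L ^+ 2 * (C + N * T)) =
    a ^+ 2 * L ^+ 3 * (iN * iN) * C + a ^+ 2 * L ^+ 3 * (iN * iN * N) * T by field.
  by rewrite e1.
have E : A0 - a * gh + L / 2 * a ^+ 2 * (h2 + iN * iN * Q) =
  A0 - a * g2 / 2 - a * h2 / 2 + a * D / 2 + L / 2 * a ^+ 2 * h2 + L / 2 * a ^+ 2 * (iN * iN) * Q.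
  have -> : a * gh = a * (2 * gh) / 2 by field.
  rewrite hgh; ring.
rewrite E.
have E2 : a * (1 - L * a) * h2 = a * h2 - L * a ^+ 2 * h2 by ring.
rewrite E2 in f2.
have E3 : (1 - mu * a) * A0 = A0 - a * (2 * mu * A0) / 2 by field.
rewrite E3.
lra.
Qed.

Lemma sum_lin (R : realType) (I : finType) (A a K : R) (X Y : I -> R) :
  \sum_i (A - a * X i + K * Y i) = \sum_(i : I) A - a * \sum_i X i + K * \sum_i Y i.
Proof. by rewrite big_split /= sumB' -!mulr_sumr. Qed.

Section Main.
Variables (R : realType) (n m p : nat).
Hypotheses (hn : (0 < n)%N) (hm : (0 < m)%N).
Variables (f : 'I_n -> 'I_m -> 'rV[R]_p -> R) (gr : 'I_n -> 'I_m -> 'rV[R]_p -> 'rV[R]_p)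
  (L : R).
Hypotheses (hL : 0 < L) (hgrad : forall i j, has_gradient (f i j) (gr i j))
  (hsmooth : forall i j, L_smooth_grad L (gr i j)).
Variable (Fobj : 'rV[R]_p -> R).
Hypothesis hF : forall x, Fobj x = n%:R^-1 * \sum_(i < n) (m%:R^-1 * \sum_(j < m) f i j x).

Let N : R := n%:R.
Let M : R := m%:R.
Lemma N_gt0 : 0 < N. Proof. by rewrite ltr0n. Qed.
Lemma M_gt0 : 0 < M. Proof. by rewrite ltr0n. Qed.

Definition Gv (y : 'rV[R]_p) := N^-1 *: \sum_i (M^-1 *: \sum_j gr i j y).

Lemma avg_const (c : R) : N^-1 * \sum_(i < n) (M^-1 * \sum_(j < m) c) = c.
Proof.
have hN := N_gt0; have hM := M_gt0.
rewrite (eq_bigr (fun _ => c)); last first.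
  by move=> i _; rewrite sumr_const card_ord -mulr_natl mulrA mulVf ?mul1r // gt_eqF.
by rewrite sumr_const card_ord -mulr_natl mulrA mulVf ?mul1r // gt_eqF.
Qed.

Lemma Fdescent (y d : 'rV[R]_p) :
  Fobj (d + y) <= Fobj y + dotv (Gv y) d + L / 2 * dotv d d.
Proof.
have hN := N_gt0; have hM := M_gt0.
have -> : dotv (Gv y) d = N^-1 * \sum_(i < n) (M^-1 * \sum_(j < m) dotv (gr i j y) d).
  rewrite /Gv dotvZl dotv_suml; congr (_ * _); apply: eq_bigr => i _.
  by rewrite dotvZl dotv_suml.
rewrite -[L / 2 * dotv d d]avg_const !hF -!mulrDr ler_pM2l ?invr_gt0 //.
rewrite -!big_split /=; apply: ler_sum => i _.
rewrite -!mulrDr ler_pM2l ?invr_gt0 // -!big_split /=; apply: ler_sum => j _.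
exact: descent.
Qed.


Variable (S : gt_state R n m p).
Let xb := xbar S.
Definition dd i t := gr i t (st_x S i) - gr i t (st_z S i t).
Lemma descent_step (y g : 'rV[R]_p) a :
  Fobj (y - a *: g) <= Fobj y - a * dotv (Gv y) g + L / 2 * a ^+ 2 * dotv g g.
Proof.
move: (Fdescent y ((- a) *: g)); move: (Gv y) => G H.
rewrite addrC in H; rewrite !dotvZr !dotvZl scaleNr in H.
have E : L / 2 * (- a * (- a * dotv g g)) = L / 2 * a ^+ 2 * dotv g g by ring.
rewrite E mulNr in H; lra.
Qed.

Definition gi i t := dd i t + M^-1 *: \sum_j gr i j (st_z S i j).
Definition hi i := M^-1 *: \sum_j gr i j (st_x S i).
Definition ei i t := gi i t - hi i.
Definition Hv := N^-1 *: \sum_i hi i.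

Lemma gt_g_gi c i : gt_g gr S c i = gi i (c i).1.
Proof. by []. Qed.

Lemma ei_dd i t : ei i t = dd i t - M^-1 *: \sum_j dd i j.
Proof.
have hM := M_gt0.
rewrite /ei /gi /hi /dd sumB' scalerBr opprB addrA.
by rewrite addrAC.
Qed.

Lemma sum_ei i : \sum_t ei i t = 0.
Proof.
have hM := M_gt0.
under eq_bigr do rewrite ei_dd.
rewrite sumB' sumr_const card_ord -scaler_nat scalerA -/M mulrC mulVf ?gt_eqF // scale1r subrr.
done.

Qed.


Notation KK := (Kc R 'I_n ('I_m * 'I_m)%type).

Lemma sum_pair1 (phi : 'I_m -> R) : \sum_(x : ('I_m * 'I_m)%type) phi x.1 = M * \sum_t phi t.
Proof.
rewrite -(pair_big xpredT xpredT (fun a _ => phi a)) /= mulr_sumr.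
by apply: eq_bigr => t _; rewrite sumr_const card_ord mulr_natl.
Qed.

Lemma Esq i (psi : 'I_m -> R) :
  \sum_(c : draw n m) psi (c i).1 = KK * (M^-1 * \sum_t psi t).
Proof.
have hM := M_gt0.
have := EA i (fun x : 'I_m * 'I_m => psi x.1).
rewrite sum_pair1 card_prod card_ord natrM -/M => H.
apply: (mulfI (_ : M * M != 0)); first by rewrite mulf_neq0 ?gt_eqF.
rewrite H; field; rewrite gt_eqF //.
Qed.

Lemma Ezero i (phi : 'I_m -> R) : \sum_t phi t = 0 ->
  \sum_(c : draw n m) phi (c i).1 = 0.
Proof. by move=> h; rewrite Esq h mulr0 mulr0. Qed.


Definition gb (c : draw n m) := N^-1 *: \sum_i gi i (c i).1.

Lemma gb_split c : gb c = Hv + N^-1 *: \sum_i ei i (c i).1.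
Proof.
rewrite /gb /Hv -scalerDr; congr (_ *: _); rewrite -big_split /=.
by apply: eq_bigr => i _; rewrite /ei addrC subrK.
Qed.

Lemma sum_constK (a : R) : \sum_(c : draw n m) a = KK * a.
Proof. by rewrite /Kc mulr_suml; apply: eq_bigr => c _; rewrite mul1r. Qed.

Lemma sum_ei_pair i : \sum_(x : ('I_m * 'I_m)%type) ei i x.1 = 0.
Proof.
rewrite -(pair_big xpredT xpredT (fun a _ => ei i a)) /=.
rewrite (eq_bigr (fun t => ei i t *+ m)); last by move=> t _; rewrite sumr_const card_ord.
by rewrite sumrMnl sum_ei mul0rn.
Qed.

Lemma E_lin (v : 'rV[R]_p) : \sum_c dotv v (gb c) = KK * dotv v Hv.
Proof.
have E1 : forall c, dotv v (gb c) = dotv v Hv + N^-1 * \sum_i dotv v (ei i (c i).1).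
  by move=> c; rewrite gb_split dotvDr; congr (_ + _); rewrite dotvZr dotv_sumr.
under eq_bigr do rewrite E1.
rewrite big_split /= sum_constK -mulr_sumr exchange_big /= big1 ?mulr0 ?addr0 //.
move=> i _; apply: (@Ezero i (fun t => dotv v (ei i t))).
have := congr1 (dotv v) (sum_ei i); rewrite dotv_sumr dotv0r; exact.
Qed.

Lemma E_sq : \sum_c dotv (gb c) (gb c) =
  KK * (dotv Hv Hv + N^-1 * N^-1 * \sum_i (M^-1 * \sum_t dotv (ei i t) (ei i t))).
Proof.
have E1 : forall c, dotv (gb c) (gb c) = dotv Hv Hv + 2 * N^-1 * dotv Hv (\sum_i ei i (c i).1)
   + N^-1 * N^-1 * dotv (\sum_i ei i (c i).1) (\sum_i ei i (c i).1).
  by move=> c; rewrite gb_split dotv_exp.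
under eq_bigr do rewrite E1.
have B0 : \sum_(c : draw n m) dotv Hv (\sum_i ei i (c i).1) = 0.
  under eq_bigr do rewrite dotv_sumr.
  rewrite exchange_big /= big1 // => i _.
  apply: (@Ezero i (fun t => dotv Hv (ei i t))).
  have := congr1 (dotv Hv) (sum_ei i); rewrite dotv_sumr dotv0r; exact.
have C0 : \sum_(c : draw n m) dotv (\sum_i ei i (c i).1) (\sum_i ei i (c i).1) =
    \sum_i KK * (M^-1 * \sum_t dotv (ei i t) (ei i t)).
  under eq_bigr do rewrite dotv_suml; rewrite exchange_big /=.
  apply: eq_bigr => i _.
  under eq_bigr do rewrite dotv_sumr; rewrite exchange_big /=.
  rewrite (bigD1 i) //= [X in _ + X]big1 ?addr0.
    exact: (@Esq i (fun t => dotv (ei i t) (ei i t))).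
  move=> l li.
  apply: (@EBv R 'I_n ('I_m * 'I_m)%type p i l (fun x => ei i x.1) (fun x => ei l x.1)).
    by rewrite eq_sym.
  exact: sum_ei_pair.
rewrite -mulr_sumr in C0.
rewrite !big_split /= sum_constK.
rewrite (_ : \sum_(c : draw n m) 2 / N * dotv Hv (\sum_i ei i (c i).1) = 2 / N * 0); last first.
  by rewrite -mulr_sumr B0.
rewrite (_ : \sum_(c : draw n m) N^-1 / N * dotv (\sum_i ei i (c i).1) (\sum_i ei i (c i).1) =
   N^-1 / N * (KK * \sum_i (M^-1 * \sum_t dotv (ei i t) (ei i t)))); last first.
  by rewrite -[X in X = _]mulr_sumr C0.
ring.
Qed.


Lemma smooth_sq i j x y :
  dotv (gr i j x - gr i j y) (gr i j x - gr i j y) <= L ^+ 2 * dotv (x - y) (x - y).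
Proof.
have := hsmooth i j x y; rewrite -!enorm2 => H.
rewrite -exprMn lerXn2r ?nnegrE ?enorm_ge0 // mulr_ge0 ?enorm_ge0 // ltW //.
Qed.

Lemma var_bound :
  \sum_i (M^-1 * \sum_t dotv (ei i t) (ei i t)) <=
  2 * L ^+ 2 * (consensus_err S + N * t_err S).
Proof.
have hN := N_gt0; have hM := M_gt0.
rewrite /consensus_err /t_err -/N -/M [N * _]mulrA mulfV ?gt_eqF // mul1r -big_split /= mulr_sumr.
apply: ler_sum => i _.
have h1 : \sum_t dotv (ei i t) (ei i t) <= \sum_t dotv (dd i t) (dd i t).
  under eq_bigr do rewrite ei_dd.
  have hm' : (0 < #|'I_m|)%N by rewrite card_ord.
  have := var_le (dd i) hm'; rewrite card_ord; apply.
apply: (le_trans (ler_wpM2l _ h1)); first by rewrite invr_ge0 ltW.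
have h2 : \sum_t dotv (dd i t) (dd i t) <=
   \sum_t (2 * L ^+ 2 * dotv (st_x S i - xbar S) (st_x S i - xbar S)
         + 2 * L ^+ 2 * dotv (xbar S - st_z S i t) (xbar S - st_z S i t)).
  apply: ler_sum => t _.
  apply: (le_trans (smooth_sq _ _ _ _)).
  have := dotv_par (st_x S i - xbar S) (xbar S - st_z S i t).
  rewrite addrA subrK => H.
  have hL2 : 0 <= L ^+ 2 by rewrite sqr_ge0.
  have := ler_wpM2l hL2 H; lra.
apply: (le_trans (ler_wpM2l _ h2)); first by rewrite invr_ge0 ltW.
rewrite big_split /= sumr_const card_ord -[_ *+ m]mulr_natr -/M -mulr_sumr enorm2.
rewrite (eq_bigr (fun j => dotv (xbar S - st_z S i j) (xbar S - st_z S i j))); last first.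
  by move=> j _; rewrite enorm2.
rewrite le_eqVlt; apply/orP; left; apply/eqP; field; rewrite gt_eqF //.
Qed.


Lemma GH_bound :
  dotv (Gv (xbar S) - Hv) (Gv (xbar S) - Hv) <= L ^+ 2 / N * consensus_err S.
Proof.
have hN := N_gt0; have hM := M_gt0.
have -> : Gv (xbar S) - Hv =
   N^-1 *: \sum_i (M^-1 *: \sum_j (gr i j (xbar S) - gr i j (st_x S i))).
  rewrite /Gv /Hv -scalerBr -sumB'; congr (_ *: _); apply: eq_bigr => i _.
  by rewrite /hi -scalerBr -sumB'.
apply: (le_trans (jensen_ord _ hn)).
rewrite /consensus_err -/N (mulrC (L ^+ 2)) -mulrA ler_pM2l ?invr_gt0 // mulr_sumr.
apply: ler_sum => i _.
apply: (le_trans (jensen_ord _ hm)).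
rewrite enorm2 dotvN.
rewrite ler_pdivrMl // -/M.
apply: (le_trans (ler_sum _ (fun j _ => smooth_sq i j _ _))).
by rewrite sumr_const card_ord -mulr_natl.
Qed.


Variables (W : 'M[R]_n) (alpha mu Fstar : R).
Hypotheses (halpha0 : 0 < alpha) (halpha1 : alpha <= (2 * L)^-1).
Hypothesis hPL : forall x, 2 * mu * (Fobj x - Fstar) <=
     enorm (n%:R^-1 *: \sum_(i < n) (m%:R^-1 *: \sum_(j < m) gr i j x)) ^+ 2.
Hypothesis hcol : forall r, \sum_(i < n) W i r = 1.

Lemma key : \sum_i st_y S i = \sum_i st_gprev S i ->
  \sum_(c : draw n m) (Fobj (xbar (gt_step W alpha gr S c)) - Fstar) <=
  KK * ((1 - mu * alpha) * (Fobj (xbar S) - Fstar)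
    + alpha * L ^+ 2 / n%:R * consensus_err S
    + alpha ^+ 2 * L ^+ 3 / n%:R * t_err S).
Proof.
move=> hinv.
have hN := N_gt0; have hM := M_gt0.
have step : forall c, Fobj (xbar (gt_step W alpha gr S c)) - Fstar <=
   (Fobj (xbar S) - Fstar) - alpha * dotv (Gv (xbar S)) (gb c)
   + L / 2 * alpha ^+ 2 * dotv (gb c) (gb c).
  move=> c; rewrite xbar_step //.
  have -> : n%:R^-1 *: \sum_i gt_g gr S c i = gb c by [].
  have := descent_step (xbar S) (gb c) alpha; lra.
apply: (le_trans (ler_sum _ (fun c _ => step c))).
rewrite sum_lin sum_constK E_lin E_sq.
have hK : 0 < KK by apply: Kc_gt0; rewrite card_prod card_ord muln_gt0 hm.
set A0 := Fobj (xbar S) - Fstar.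
set G := Gv (xbar S).
set Q := \sum_i (M^-1 * \sum_t dotv (ei i t) (ei i t)).
have -> : KK * A0 - alpha * (KK * dotv G Hv) + L / 2 * alpha ^+ 2 * (KK * (dotv Hv Hv + N^-1 / N * Q))
   = KK * (A0 - alpha * dotv G Hv + L / 2 * alpha ^+ 2 * (dotv Hv Hv + N^-1 * N^-1 * Q)) by ring.
rewrite ler_pM2l //.
apply: (final_ineq (g2 := dotv G G) (D := dotv (G - Hv) (G - Hv)) (N := N)) => //.
- have := ler_wpM2r (ltW hL) halpha1.
  rewrite (_ : (2 * L)^-1 * L = 1 / 2) //; field; rewrite gt_eqF //.
- by rewrite invr_gt0.
- by rewrite mulVf // gt_eqF.
- by rewrite ler1n.
- by apply: sumr_ge0 => i _; apply: sqr_ge0.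
- exact: dotv_ge0.
- rewrite dotvBl !dotvBr (dotvC Hv G); ring.
- by have := hPL (xbar S); rewrite enorm2.
- exact: GH_bound.
- exact: var_bound.
Qed.

End Main.

Unset Implicit Arguments.
Set Strict Implicit.
Theorem lemma18 (R : realType) (n m p : nat) (hn : (0 < n)%N) (hm : (0 < m)%N)
  (hp : (0 < p)%N)
  (f : 'I_n -> 'I_m -> 'rV[R]_p -> R) (gr : 'I_n -> 'I_m -> 'rV[R]_p -> 'rV[R]_p)
  (L : R) (hL : 0 < L)
  (hgrad : forall i j, has_gradient (f i j) (gr i j))
  (hsmooth : forall i j, L_smooth_grad L (gr i j))
  (Fobj : 'rV[R]_p -> R)
  (hF : forall x, Fobj x = n%:R^-1 * \sum_(i < n) (m%:R^-1 * \sum_(j < m) f i j x))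
  (Fstar : R)
  (hFstar_lb : forall x, Fstar <= Fobj x)
  (hFstar_inf : forall e, 0 < e -> exists x, Fobj x < Fstar + e)
  (W : 'M[R]_n) (hW : primitive_ds W)
  (mu : R) (hmu : 0 < mu)
  (hPL : forall x, 2 * mu * (Fobj x - Fstar) <=
     enorm (n%:R^-1 *: \sum_(i < n) (m%:R^-1 *: \sum_(j < m) gr i j x)) ^+ 2)
  (alpha : R) (halpha0 : 0 < alpha) (halpha1 : alpha <= (2 * L)^-1)
  (x0 : 'rV[R]_p) (k : nat) (w : Omega n m k.+1) :
  let st := fun (w' : Omega n m k.+1) (t : nat) =>
              gt_iter W alpha gr x0 (hist_seq w') t in
  condexp k (fun w' => Fobj (xbar (st w' k.+1)) - Fstar) w <=
    (1 - mu * alpha) * (Fobj (xbar (st w k)) - Fstar)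
    + alpha * L ^+ 2 / n%:R * consensus_err (st w k)
    + alpha ^+ 2 * L ^+ 3 / n%:R * t_err (st w k).

Proof.
cbv zeta beta.
have [_ [_ [_ hcol]]] := hW.
set S := gt_iter W alpha gr x0 (hist_seq w) k.
have hinv : \sum_i st_y S i = \sum_i st_gprev S i by apply: gt_inv.
rewrite (@condexp_step R n m k w (fun c => Fobj (xbar (gt_step W alpha gr S c)) - Fstar)).
  have hK : 0 < Kc R 'I_n ('I_m * 'I_m)%type.
    by apply: Kc_gt0; rewrite card_prod card_ord muln_gt0 hm.
  rewrite ler_pdivrMr // mulrC.
  exact: (key hn hm hL hgrad hsmooth hF halpha0 halpha1 hPL hcol hinv).
move=> w' hw'; rewrite /= hist_last; congr (Fobj (xbar (gt_step _ _ _ _ _)) - _).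
rewrite /S; apply: iter_past => t tk; exact: hist_past.
Qed.
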